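(* Let $w$ be a nonempty string, and for $1 \le j \le |\mathit{LFCand}(w)|$ let $s_j$ be the $j$-th shortest string of $\mathit{LFCand}(w)$. Then $|s_{j+1}| > 2|s_j|$ for every $1 \le j < |\mathit{LFCand}(w)|$.
   Context: Let $\Sigma$ be a finite ordered alphabet, $\Sigma^+$ the set of nonempty strings over $\Sigma$. For nonempty strings $x,y$, write $x \prec y$ if either $x$ is a proper prefix of $y$, or at the first position $k$ where $x$ and $y$ differ we have $x[k] \prec y[k]$. For a set $S$ of nonempty strings, $\min_\prec S$ is its lexicographically smallest element. $\mathit{Suffix}(w)$ denotes the set of (nonempty) suffixes of $w$. For a nonempty string $w$, $\mathit{LFCand}(w) = \{x \in \mathit{Suffix}(w) \mid \exists y \in \Sigma^+ \text{ such that } xy = \min_\prec \mathit{Suffix}(wy)\}$ (its elements are suffixes of $w$, hence have distinct lengths). *)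

(* Defs.v *)
From mathcomp Require Import all_boot all_order.
Set Implicit Arguments. Unset Strict Implicit. Unset Printing Implicit Defensive.
Import Order.TTheory.
Local Open Scope order_scope.

Fixpoint lex_lt {d : Order.disp_t} {T : orderType d} (x y : seq T) : bool :=
  match x, y with
  | [::], [::] => false
  | [::], _ :: _ => true
  | _ :: _, [::] => false
  | a :: x', b :: y' => (a < b) || ((a == b) && lex_lt x' y')
  end.

Definition is_suffix {T : eqType} (x w : seq T) : bool :=
  (0 < size x)%N && (drop (size w - size x) w == x).

Definition is_min_suffix {d : Order.disp_t} {T : orderType d} (x v : seq T) : Prop :=
  is_suffix x v /\ forall z, is_suffix z v -> z = x \/ lex_lt x z.

Definition LFCand {d : Order.disp_t} {T : orderType d} (w x : seq T) : Prop :=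
  is_suffix x w /\
  exists y : seq T, (0 < size y)%N /\ is_min_suffix (x ++ y) (w ++ y).

(* Main.v *)
Require Import Defs.
From mathcomp Require Import all_boot all_order.
Import Order.TTheory.

Section Aux.
Context (d : Order.disp_t) (T : orderType d).

Lemma lex_cat (u a b : seq T) : lex_lt (u ++ a) (u ++ b) = lex_lt a b.
Proof. elim: u => [|c u IH] //=. by rewrite Order.POrderTheory.ltxx eqxx IH. Qed.

Lemma lex_asym (a b : seq T) : lex_lt a b -> lex_lt b a -> False.
Proof.
elim: a b => [|c a IH] [|e b] //=.
case/orP=> [ce|/andP[/eqP-> h]]; case/orP=> [ec|/andP[/eqP ee h2]].
- by move: (Order.POrderTheory.lt_asym c e); rewrite ce ec.
- by move: ce; rewrite ee Order.POrderTheory.ltxx.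
- by move: ec; rewrite Order.POrderTheory.ltxx.
- exact: (IH b).
Qed.

Lemma lex_tail (a b y y' : seq T) : (size a <= size b)%N ->
  take (size a) b != a -> lex_lt (a ++ y) (b ++ y) = lex_lt (a ++ y') (b ++ y').
Proof.
elim: a b => [|c a IH] b; first by rewrite take0 eqxx.
case: b => [|e b] //=; rewrite ltnS => hs hne.
case: (eqVneq c e) => [ce|ne].
  subst e; rewrite Order.POrderTheory.ltxx /=. idtac.
  apply: IH => //; move: hne; by rewrite eqseq_cons eqxx.
by [].
Qed.

Lemma suffix_size (x w : seq T) : is_suffix x w -> (size x <= size w)%N.
Proof.
case/andP=> _ /eqP <-; rewrite size_drop; exact: leq_subr.
Qed.

Lemma suffix_cat (x w y : seq T) : is_suffix x w -> is_suffix (x ++ y) (w ++ y).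
Proof.
move=> h; have hs := @suffix_size x w h; case/andP: h => h0 /eqP h.
apply/andP; split; first by rewrite size_cat addn_gt0 h0.
rewrite !size_cat subnDr drop_cat.
have hl : (size w - size x < size w)%N by rewrite -subn_gt0 subKn.
by rewrite hl h.
Qed.

Lemma drop_suffix (w : seq T) m : (0 < size (drop m w))%N -> is_suffix (drop m w) w.
Proof.
move=> h; apply/andP; split; first exact: h.
rewrite size_drop; rewrite size_drop subn_gt0 in h.
rewrite subKn; first exact: eqxx.
exact: ltnW.
Qed.

Lemma suffix_drop (s t : seq T) k : is_suffix s t -> (0 < size (drop k s))%N ->
  is_suffix (drop k s) t.
Proof.
case/andP=> _ /eqP <-; rewrite drop_drop => h; exact: drop_suffix.
Qed.

End Aux.
Arguments lex_cat {d T}. Arguments lex_asym {d T}. Arguments lex_tail {d T}.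
Arguments suffix_size {d T}. Arguments suffix_cat {d T}. Arguments drop_suffix {d T}. Arguments suffix_drop {d T}.

From mathcomp Require Import zify.
Lemma N1 (a b c : nat) : (a <= c -> b <= c -> a < b -> b - a + (c - b) = c - a)%N.
Proof. move=> *; lia. Qed.
Lemma N2 (a b : nat) : (b <= 2 * a -> b - a <= a)%N.
Proof. move=> *; lia. Qed.
Lemma N4 (a c p : nat) : (0 < p -> p <= a -> a - p + c = a + c -> False)%N.
Proof. move=> *; lia. Qed.

Theorem lemma6 (d : Order.disp_t) (T : finOrderType d) (w s s' : seq T) :
  (0 < size w)%N ->
  LFCand w s -> LFCand w s' ->
  (size s < size s')%N ->
  (forall t, LFCand w t -> ~ (size s < size t < size s')%N) ->
  (2 * size s < size s')%N.
Proof.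
move=> _ [sufs [y [y0 [ssuf smin]]]] [sufs' [y' [y'0 [_ smin']]]] hlt _.
have ss := suffix_size _ _ sufs; have ss' := suffix_size _ _ sufs'.
have l1 : lex_lt (s ++ y) (s' ++ y).
  case: (smin _ (suffix_cat _ _ y sufs')) => [e|//].
  by exfalso; have := congr1 size e; rewrite !size_cat => E; move: hlt; rewrite -(ltn_add2r (size y)) E ltnn.
have l2 : lex_lt (s' ++ y') (s ++ y').
  case: (smin' _ (suffix_cat _ _ y' sufs)) => [e|//].
  by exfalso; have := congr1 size e; rewrite !size_cat => E; move: hlt; rewrite -(ltn_add2r (size y')) E ltnn.
have pre : take (size s) s' = s.
  apply/eqP; apply/negPn/negP => ne.
  have := lex_tail _ _ y y' (ltnW hlt) ne; rewrite l1 => /esym hh.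
  exact: (lex_asym _ _ l2 hh).
set p := (size s' - size s)%N.
have suf : drop p s' = s.
  case/andP: sufs => _ /eqP e1; case/andP: sufs' => _ /eqP e2.
  rewrite -e2 drop_drop -e1; congr drop; rewrite /p; exact: N1.
rewrite ltnNge; apply/negP => hle.
set u := take p s'.
have hs'e : s' = u ++ s by rewrite -{1}(cat_take_drop p s') suf.
have hsu : s = u ++ drop p s.
  rewrite -{1}(cat_take_drop p s); congr cat.
  by rewrite /u -{1}pre take_takel //; rewrite /p; exact: N2.
set v := drop p s.
have su : size u = p by rewrite /u; apply: size_takel; exact: leq_subr.
have l3 : lex_lt (v ++ y) (s ++ y).
  move: l1; rewrite hs'e {1}hsu -!catA lex_cat; exact.
have e3 : drop p (s ++ y) = v ++ y.
  rewrite {1}hsu -catA; apply: drop_size_cat; exact: su.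
have sv : is_suffix (v ++ y) (w ++ y).
  rewrite -e3; apply: suffix_drop => //; by rewrite e3 size_cat addn_gt0 y0 orbT.
case: (smin _ sv) => [e|l4].
  by exfalso; have := congr1 size e; rewrite !size_cat /v size_drop; apply: N4; [by rewrite /p subn_gt0|exact: N2].
exact: (lex_asym _ _ l3 l4).
Qed.
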